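(* Let $H$ be a Hilbert space and $U_{ik}\in B(H)$, $i,k=1,\dots,n$, operators satisfying relations (R1)–(R5). Then every $U_{ik}$ is normal: $U_{ik}U_{ik}^*=U_{ik}^*U_{ik}$ for all $i,k$.
   Context: $n\ge2$, $\theta\in M_n(\mathbb R)$ skew-symmetric, $\omega_{ij}=e^{2\pi i\theta_{ij}}$. Relations, for all $i,j,k,l\in\{1,\dots,n\}$: (R1) $U_{ik}U_{jl}+\omega_{ji}U_{jk}U_{il}=\omega_{kl}U_{il}U_{jk}+\omega_{ji}\omega_{kl}U_{jl}U_{ik}$; (R2) $\sum_iU_{ik}U_{il}^*=\delta_{kl}1$; (R3) $\sum_iU_{il}^*U_{ik}=\delta_{kl}1$; (R4) $U_{jk}U_{ik}^*=0$ for $i\neq j$; (R5) $U_{ik}^*U_{jk}=0$ for $i\neq j$. *)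

(* Defs.v *)
From HB Require Import structures.
From mathcomp Require Import all_boot all_order all_algebra.
From mathcomp Require Import reals trigo.
From mathcomp Require Import complex.
Set Implicit Arguments. Unset Strict Implicit. Unset Printing Implicit Defensive.
Import Order.TTheory GRing.Theory Num.Theory.
Local Open Scope ring_scope.

Section Hilbert.
Variable R : realType.
Local Notation C := (R[i]).
(* The complex scalar field is C = R[i], a numClosedFieldType; its order is
   the usual partial order (z >= 0 iff z is real and nonnegative). *)

Definition cexpi (t : R) : C := Complex (cos t) (sin t).

Definition omega (n : nat) (theta : 'M[R]_n) (i j : 'I_n) : C :=
  cexpi (2 * pi * theta i j).

Variable V : lmodType C.
Variable ip : V -> V -> C.

Definition is_inner_product : Prop :=
  [/\ forall (a : C) (x y z : V), ip (a *: x + y) z = a * ip x z + ip y z,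
      forall x y : V, ip y x = Num.conj (ip x y),
      forall x : V, 0 <= ip x x
    & forall x : V, ip x x = 0 -> x = 0].

Definition hnorm (x : V) : C := sqrtC (ip x x).

Definition is_complete : Prop :=
  forall u : nat -> V,
    (forall e : C, 0 < e -> exists N : nat, forall m p : nat,
        (N <= m)%N -> (N <= p)%N -> hnorm (u m - u p) < e) ->
    exists l : V, forall e : C, 0 < e -> exists N : nat, forall m : nat,
        (N <= m)%N -> hnorm (u m - l) < e.

Definition is_hilbert : Prop := is_inner_product /\ is_complete.

Definition is_bounded_op (T : V -> V) : Prop :=
  (forall (a : C) (x y : V), T (a *: x + y) = a *: T x + T y) /\
  exists M : C, forall x : V, hnorm (T x) <= M * hnorm x.

Definition is_adjoint (T S : V -> V) : Prop :=
  forall x y : V, ip (T x) y = ip x (S y).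

End Hilbert.

(* Main.v *)
Require Import Defs.
From HB Require Import structures.
From mathcomp Require Import all_boot all_order all_algebra.
From mathcomp Require Import reals trigo.
From mathcomp Require Import complex.
From mathcomp Require Import lra.
Import Order.TTheory GRing.Theory Num.Theory.
Local Open Scope ring_scope.

Set Implicit Arguments. Unset Strict Implicit.
Section Helpers.
Variable R : realType.
Variable V : lmodType R[i].

Definition islin (T : V -> V) := forall (a : R[i]) (x y : V), T (a *: x + y) = a *: T x + T y.

Lemma lin0 T : islin T -> T 0 = 0.
Proof.
move=> H; have h := H 1 0 0; rewrite !scale1r addr0 in h.
by apply: (addrI (T 0)); rewrite addr0 -h.
Qed.

Lemma linD T : islin T -> forall x y, T (x + y) = T x + T y.
Proof. by move=> H x y; have := H 1 x y; rewrite !scale1r. Qed.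

Lemma linZ T : islin T -> forall a x, T (a *: x) = a *: T x.
Proof. by move=> H a x; rewrite -(addr0 (a *: x)) H lin0 // addr0. Qed.

Lemma linS T : islin T -> forall (I : Type) (r : seq I) (P : pred I) (F : I -> V),
  T (\sum_(i <- r | P i) F i) = \sum_(i <- r | P i) T (F i).
Proof. move=> H I r P F; apply: big_morph; [exact: linD | exact: lin0]. Qed.

Variable ip : V -> V -> R[i].
Hypothesis Hip : is_inner_product ip.

Lemma ip_0l z : ip 0 z = 0.
Proof.
case: Hip => Hl _ _ _; have h := Hl 1 0 0 z; rewrite scale1r addr0 mul1r in h.
by apply: (addrI (ip 0 z)); rewrite addr0 -h.
Qed.

Lemma ip_Bl x y z : ip (x - y) z = ip x z - ip y z.
Proof.
case: Hip => Hl _ _ _.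
have h := Hl (-1) y 0 z; rewrite addr0 ip_0l addr0 scaleN1r mulN1r in h.
by have := Hl 1 x (-y) z; rewrite scale1r mul1r h => ->.
Qed.

Lemma ip_0r z : ip z 0 = 0.
Proof. case: Hip => _ Hc _ _; by rewrite Hc ip_0l rmorph0. Qed.

Lemma ip_Br x y z : ip z (x - y) = ip z x - ip z y.
Proof. case: Hip => _ Hc _ _; by rewrite Hc ip_Bl rmorphB [ip z x]Hc [ip z y]Hc. Qed.

Lemma adj_unique T S1 S2 : is_adjoint ip T S1 -> is_adjoint ip T S2 ->
  forall y, S1 y = S2 y.
Proof.
move=> H1 H2 y; apply/eqP; rewrite -subr_eq0; apply/eqP.
case: Hip => _ _ _ Hd; apply: Hd.
by rewrite ip_Br -H1 -H2 subrr.
Qed.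

Lemma adj_sym T S : is_adjoint ip T S -> is_adjoint ip S T.
Proof.
move=> H x y; case: Hip => _ Hc _ _.
by rewrite Hc -H -Hc.
Qed.

Lemma adj_comp A As B Bs : is_adjoint ip A As -> is_adjoint ip B Bs ->
  is_adjoint ip (fun x => A (B x)) (fun y => Bs (As y)).
Proof. by move=> HA HB x y; rewrite HA HB. Qed.

Lemma adj_ext T1 T2 S : (forall x, T1 x = T2 x) -> is_adjoint ip T1 S -> is_adjoint ip T2 S.
Proof. by move=> E H x y; rewrite -E H. Qed.

Lemma adj_zero : is_adjoint ip (fun _ => 0) (fun _ => 0).
Proof. by move=> x y; rewrite ip_0l ip_0r. Qed.

End Helpers.
Unset Implicit Arguments.

Lemma pigeon (T : eqType) (V : zmodType) (P : T -> T -> V -> V) :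
 (forall m l (s : seq T) (f : T -> V), P m l (\sum_(a <- s) f a) = \sum_(a <- s) P m l (f a)) ->
 (forall m m' l l' y, l != l' -> P m l (P m' l' y) = P m' l' (P m l y)) ->
 (forall m l l' y, l != l' -> P m l (P m l' y) = 0) ->
 forall L : seq T, uniq L -> forall (M : seq T) (y : V), (size M < size L)%N ->
 (forall l, l \in L -> y = \sum_(m <- M) P m l y) -> y = 0.
Proof.
move=> Psum F2 F3; elim=> [|l0 L IH] //= /andP[l0L uL] M y szM Hy.
rewrite (Hy l0 (mem_head _ _)) big1_seq // => m /andP[_ mM].
apply: (IH uL (rem m M)).
  by rewrite size_rem //; case: M mM szM {Hy IH} => //= a M' _.
move=> l lL.
have ll0 : l != l0 by apply: contraNneq l0L => <-.
have Hyl := Hy l (mem_behead (s:=l0::L) lL).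
rewrite {1}Hyl Psum (big_rem m mM) /= F3 ?add0r; last by rewrite eq_sym.
apply: eq_bigr => m' _; by rewrite F2 // eq_sym.
Qed.

Theorem proposition3p14 (R : realType) (V : lmodType R[i]) (ip : V -> V -> R[i])
  (n : nat) (theta : 'M[R]_n) (U Us : 'I_n -> 'I_n -> V -> V) :
  is_hilbert ip ->
  (2 <= n)%N ->
  theta^T = - theta ->
  (forall i k, is_bounded_op ip (U i k)) ->
  (forall i k, is_bounded_op ip (Us i k)) ->
  (forall i k, is_adjoint ip (U i k) (Us i k)) ->
  (* (R1) *)
  (forall (i j k l : 'I_n) (x : V),
      U i k (U j l x) + omega theta j i *: U j k (U i l x)
      = omega theta k l *: U i l (U j k x)
        + (omega theta j i * omega theta k l) *: U j l (U i k x)) ->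
  (* (R2) *)
  (forall (k l : 'I_n) (x : V),
      \sum_(i < n) U i k (Us i l x) = if k == l then x else 0) ->
  (* (R3) *)
  (forall (k l : 'I_n) (x : V),
      \sum_(i < n) Us i l (U i k x) = if k == l then x else 0) ->
  (* (R4) *)
  (forall (i j k : 'I_n) (x : V), i != j -> U j k (Us i k x) = 0) ->
  (* (R5) *)
  (forall (i j k : 'I_n) (x : V), i != j -> Us i k (U j k x) = 0) ->
  forall (i k : 'I_n) (x : V), U i k (Us i k x) = Us i k (U i k x).
Proof.
move=> [Hip _] Hn Hth HU HUs Hadj R1 R2 R3 R4 R5.
have lU i k : islin (U i k) := (HU i k).1.
have lUs i k : islin (Us i k) := (HUs i k).1.
have PI1 i k x : U i k (Us i k (U i k x)) = U i k x.
  have H := R3 k k x; rewrite eqxx in H.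
  rewrite -{2}H (linS (lU i k)) (bigD1 i) //= big1 ?addr0 // => j ji.
  by rewrite R4.
have PI2 i k x : Us i k (U i k (Us i k x)) = Us i k x.
  have H := R2 k k x; rewrite eqxx in H.
  rewrite -{2}H (linS (lUs i k)) (bigD1 i) //= big1 ?addr0 // => j ji.
  by rewrite R5 // eq_sym.
have Row2 i k l x : k != l -> Us i l (U i k x) = 0.
  move=> kl; have H := R3 k l x; rewrite (negbTE kl) in H.
  have H2 : U i l (Us i l (U i k x)) = 0.
    have := congr1 (U i l) H; rewrite (linS (lU i l)) lin0 // (bigD1 i) //= big1 ?addr0 // => j ji.
    by rewrite R4.
  by rewrite -PI2 H2 lin0.
have Om i : omega theta i i = 1.
  have h := congr1 (fun M : 'M[R]_n => M i i) Hth; rewrite /= !mxE in h.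
  have h0 : theta i i = 0 by lra.
  by rewrite /omega h0 mulr0 /cexpi cos0 sin0.
have Row3 i k l x : k != l -> U i k (U i l x) = 0.
  move=> kl; have h := R1 i i k l x; rewrite Om scale1r mul1r in h.
  have h2 := congr1 (Us i k) h.
  rewrite !(linD (lUs i k)) !(linZ (lUs i k)) in h2.
  have r0 : Us i k (U i l (U i k x)) = 0 by rewrite Row2 // eq_sym.
  rewrite r0 scaler0 addr0 in h2.
  have v0 : Us i k (U i k (U i l x)) = 0.
    move/eqP: h2; rewrite -mulr2n -scaler_nat scaler_eq0 pnatr_eq0 /=.
    by move/eqP.
  by rewrite -PI1 v0 lin0.
have Bid i k l x : k != l -> U i k x =
    \sum_(j < n) (omega theta j i * omega theta k l) *: U j l (U i k (Us j l x)).
  move=> kl.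
  have hs : \sum_(j < n) (U i k (U j l (Us j l x)) + omega theta j i *: U j k (U i l (Us j l x)))
    = \sum_(j < n) (omega theta k l *: U i l (U j k (Us j l x))
        + (omega theta j i * omega theta k l) *: U j l (U i k (Us j l x))).
    by apply: eq_bigr => j _; apply: R1.
  rewrite !big_split /= in hs.
  have e1 : \sum_(j < n) U i k (U j l (Us j l x)) = U i k x.
    by rewrite -(linS (lU i k)) R2 eqxx.
  have e2 : \sum_(j < n) omega theta j i *: U j k (U i l (Us j l x)) = 0.
    apply: big1 => j _; case: (eqVneq j i) => [->|ji].
      by rewrite Row3 // scaler0.
    by rewrite R4 // lin0 // scaler0.
  have e3 : \sum_(j < n) omega theta k l *: U i l (U j k (Us j l x)) = 0.
    by rewrite -scaler_sumr -(linS (lU i l)) R2 (negbTE kl) lin0 // scaler0.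
  by rewrite e1 e2 e3 addr0 add0r in hs.
have F4 i k m l x : k != l -> U m l (Us m l (U i k x)) = U i k (U m l (Us m l x)).
  move=> kl.
  rewrite (Bid i k l x kl) (Bid i k l (U m l (Us m l x)) kl).
  rewrite (linS (lUs m l)) (linS (lU m l)) [LHS](bigD1 m) //= [RHS](bigD1 m) //=.
  have A1 : \sum_(j < n | j != m) U m l (Us m l ((omega theta j i * omega theta k l) *: U j l (U i k (Us j l x)))) = 0.
    apply: big1 => j jm; by rewrite (linZ (lUs m l)) (R5 m j l) ?scaler0 ?lin0 // eq_sym.
  have A2 : \sum_(j < n | j != m) (omega theta j i * omega theta k l) *: U j l (U i k (Us j l (U m l (Us m l x)))) = 0.
    apply: big1 => j jm; by rewrite R5 // (lin0 (lU i k)) (lin0 (lU j l)) scaler0.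
  by rewrite A1 A2 !addr0 (linZ (lUs m l)) (linZ (lU m l)) PI1 PI2.
have HP m l : is_adjoint ip (fun x => U m l (Us m l x)) (fun y => U m l (Us m l y)).
  exact: (adj_comp (Hadj m l) (adj_sym Hip (Hadj m l))).
have F4s i k m l y : k != l -> Us i k (U m l (Us m l y)) = U m l (Us m l (Us i k y)).
  move=> kl.
  have h1 := adj_comp (Hadj i k) (HP m l).
  have h2 := adj_comp (HP m l) (Hadj i k).
  have h2' := adj_ext (fun x => F4 i k m l x kl) h2.
  by rewrite (adj_unique Hip h1 h2').
have Zero i j k x : i != j -> U i k (U j k x) = 0.
  move=> ij.
  pose s := index_enum 'I_n.
  have us : uniq s := index_enum_uniq _.
  have szs : size s = n by rewrite /s /index_enum unlock -enumT -cardT card_ord.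
  have jin : j \in rem i s by rewrite mem_rem_uniq // inE eq_sym ij mem_index_enum.
  apply: (@pigeon _ _ (fun m l v => U m l (Us m l v)) _ _ _ (rem k s) (rem_uniq _ us) (rem j (rem i s))).
  - by move=> m l s' f; rewrite (linS (lUs m l)) (linS (lU m l)).
  - move=> m m' l l' y ll' /=.
    have l'l : l' != l by rewrite eq_sym.
    by rewrite F4 // F4s.
  - move=> m l l' y ll' /=.
    by rewrite Row2 ?(lin0 (lU m l)) // eq_sym.
  - rewrite !size_rem ?szs ?mem_index_enum //.
    have : (1 < n)%N := Hn. by case: (n) => [|[|n']].
  - move=> l; rewrite mem_rem_uniq // inE => /andP[lk _].
    set y := U i k (U j k x).
    have h := R2 l l y; rewrite eqxx in h.
    rewrite -{1}h (big_rem i) ?mem_index_enum //= (big_rem j) //=.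
    have kl : k != l by rewrite eq_sym.
    have p1 : U i l (Us i l y) = 0 by rewrite /y Row2 ?(lin0 (lU i l)).
    have p2 : U j l (Us j l y) = 0.
      by rewrite /y F4 // Row2 // (lin0 (lU j l)) (lin0 (lU i k)).
    by rewrite p1 p2 !add0r.
have Zs i j k y : i != j -> Us j k (Us i k y) = 0.
  move=> ij. have h1 := adj_comp (Hadj i k) (Hadj j k).
  have h2 := adj_ext (T1 := fun _ => 0) (fun x => esym (Zero i j k x ij)) (adj_zero Hip).
  exact: (adj_unique Hip h1 h2 y).
move=> i k x.
have h3 : \sum_(j < n) Us j k (U j k x) = x by rewrite R3 eqxx.
have h2 : \sum_(j < n) U j k (Us j k (Us i k (U i k x))) = Us i k (U i k x) by rewrite R2 eqxx.
have A1 : \sum_(j < n | j != i) U i k (Us i k (Us j k (U j k x))) = 0.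
  by apply: big1 => j ji; rewrite Zs // (lin0 (lU i k)).
have A2 : \sum_(j < n | j != i) U j k (Us j k (Us i k (U i k x))) = 0.
  by apply: big1 => j ji; rewrite Zs ?(lin0 (lU j k)) ?(lin0 (lUs j k)) // eq_sym.
rewrite -{1}h3 -h2 (linS (lUs i k)) (linS (lU i k)) [LHS](bigD1 i) //= [RHS](bigD1 i) //=.
by rewrite A1 A2.
Qed.
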